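(* Let $X$, $Y$ and $(Z,d)$ be metric spaces, $1\le\alpha<\omega_1$, and let $f\colon X\times Y\to Z$ satisfy: (1) the family $\{f^x:x\in X\}$ of $x$-sections is equi-$\alpha$-GLP (as functions $Y\to Z$); (2) for every $y\in Y$ the $y$-section $f_y\colon X\to Z$ is of Borel class $\alpha$. Then $f\colon X\times Y\to Z$ is of Borel class $\alpha$.
   Context: For $x\in X$, $y\in Y$: $f^x\colon Y\to Z$, $f^x(y)=f(x,y)$ and $f_y\colon X\to Z$, $f_y(x)=f(x,y)$. In a metric space, sets of additive class $0$ are the open sets, of multiplicative class $0$ the closed sets; for $\alpha\ge1$, sets of additive class $\alpha$ are countable unions of sets of multiplicative classes $<\alpha$, and sets of multiplicative class $\alpha$ are complements of sets of additive class $\alpha$ (so additive class 1 = $F_\sigma$). A function between metric spaces is of Borel class $\alpha$ if the preimage of every open set is of additive class $\alpha$. A family of subsets of $Y$ is discrete if each point has a neighborhood meeting at most one member; $\sigma$-discrete if it is a countable union of discrete families. A family $\mathscr F\subseteq Z^Y$ is equi-$\alpha$-GLP if for every $\varepsilon>0$ there is a $\sigma$-discrete family $\mathcal A_\varepsilon$ of subsets of $Y$ of additive class $\alpha$ such that $Y=\bigcup\mathcal A_\varepsilon$ and $\operatorname{diam}g(A)\le\varepsilon$ for all $A\in\mathcal A_\varepsilon$ and all $g\in\mathscr F$. *)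

(* Defs.v *)
From HB Require Import structures.
From mathcomp Require Import all_boot all_order all_algebra.
From mathcomp Require Import all_classical all_reals all_analysis.
Set Implicit Arguments.
Unset Strict Implicit.
Unset Printing Implicit Defensive.
Import Order.TTheory GRing.Theory Num.Theory.
Local Open Scope classical_set_scope.
Local Open Scope ring_scope.

(** Countable ordinals as Brouwer trees: zero, successor, supremum of a
    sequence.  Every tree denotes a countable ordinal and every countable
    ordinal (every ordinal < omega_1) is denoted by some tree. *)
Inductive cord : Type :=
| cord0 : cord
| cordS : cord -> cord
| cordL : (nat -> cord) -> cord.

(** The ordinal order on the denotations:
    [cord_le a b] = (|a| <= |b|), [cord_lt a b] = (|a| < |b|). *)
Inductive cord_le : cord -> cord -> Prop :=
| cord_le0 b : cord_le cord0 b
| cord_leS a b : cord_lt a b -> cord_le (cordS a) b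
| cord_leL f b : (forall n, cord_le (f n) b) -> cord_le (cordL f) b
with cord_lt : cord -> cord -> Prop :=
| cord_ltS a b : cord_le a b -> cord_lt a (cordS b)
| cord_ltL a f n : cord_lt a (f n) -> cord_lt a (cordL f).

Inductive additive_class {T : topologicalType} : cord -> set T -> Prop :=
| additive_class_open (a : cord) (A : set T) :
    cord_le a cord0 -> open A -> additive_class a A
| additive_class_union (a : cord) (A : set T) (B : nat -> set T)
    (b : nat -> cord) :
    cord_lt cord0 a ->
    (forall n, cord_lt (b n) a) ->
    (forall n, additive_class (b n) (~` B n)) ->
    A = \bigcup_n B n ->
    additive_class a A.

Definition multiplicative_class {T : topologicalType} (a : cord) (A : set T) :=
  additive_class a (~` A).

Definition borel_class {S T : topologicalType} (a : cord) (f : S -> T) :=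
  forall U : set T, open U -> additive_class a (f @^-1` U).

Definition discrete_family {T : topologicalType} (F : set (set T)) :=
  forall y : T, exists2 N : set T, nbhs y N &
    forall A B : set T, F A -> F B ->
      N `&` A !=set0 -> N `&` B !=set0 -> A = B.

Definition sigma_discrete_family {T : topologicalType} (F : set (set T)) :=
  exists2 G : nat -> set (set T), (forall n, discrete_family (G n)) &
    F = \bigcup_n G n.

Definition equi_GLP {R : realType} {Y : topologicalType} {Z : metricType R}
    (a : cord) (F : set (Y -> Z)) :=
  forall eps : R, 0 < eps ->
    exists A : set (set Y),
      [/\ sigma_discrete_family A,
          (forall U, A U -> additive_class a U),
          \bigcup_(U in A) U = setT &
          forall U g, A U -> F g ->
            forall u v, U u -> U v -> mdist (g u) (g v) <= eps].

(* Main.v *)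
Require Import Defs.
From HB Require Import structures.
From mathcomp Require Import all_boot all_order all_algebra.
From mathcomp Require Import all_classical all_reals all_analysis.
From mathcomp Require Import lra.
From Stdlib Require Cantor.
Import Order.TTheory GRing.Theory Num.Theory.
Local Open Scope classical_set_scope.
Local Open Scope ring_scope.

Scheme cle_ind2 := Induction for cord_le Sort Prop
with clt_ind2 := Induction for cord_lt Sort Prop.
Combined Scheme cle_clt_ind from cle_ind2, clt_ind2.

Lemma le_to {x y : cord} : cord_le x y ->
  forall y', (forall z, cord_lt z y -> cord_lt z y') -> cord_le x y'.
Proof.
elim => {x y} [b|a b H|f b H IH] y' Hy; constructor; auto.
Qed.

Lemma le_S_lt : (forall a b, cord_le a b -> cord_le a (cordS b)) /\
  (forall a b, cord_lt a b -> cord_le a b).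
Proof.
apply: (cle_clt_ind (fun a b _ => cord_le a (cordS b)) (fun a b _ => cord_le a b)).
- by move=> b; constructor.
- by move=> a b H IH; do 2 constructor.
- by move=> f b H IH; constructor => n; exact: IH.
- by move=> a b H IH.
- by move=> a f n H IH; apply: (le_to IH) => z Hz; apply: cord_ltL Hz.
Qed.

Lemma clt_le {a b} : cord_lt a b -> cord_le a b.
Proof. exact: le_S_lt.2. Qed.

Lemma cle_refl a : cord_le a a.
Proof.
elim: a => [|a IH|f IH]; constructor.
- by constructor.
- by move=> n; apply: (le_to (IH n)) => z Hz; exact: cord_ltL Hz.
Qed.

Lemma le_lt_aux {b c} : cord_lt b c ->
  forall a, (forall c', cord_le b c' -> cord_le a c') -> cord_lt a c.
Proof.
elim => {b c} [b c' H|b g n H IH] a Ha.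
- by constructor; apply: Ha.
- by apply: cord_ltL (IH a Ha).
Qed.

Lemma ctrans : (forall a b, cord_le a b -> forall c, cord_le b c -> cord_le a c) /\
  (forall a b, cord_lt a b -> forall c, cord_le b c -> cord_lt a c).
Proof.
apply: (cle_clt_ind (fun a b _ => forall c, cord_le b c -> cord_le a c)
                    (fun a b _ => forall c, cord_le b c -> cord_lt a c)).
- by move=> b c _; constructor.
- by move=> a b H IH c Hc; constructor; apply: IH.
- by move=> f b H IH c Hc; constructor => n; apply: IH.
- move=> a b H IH c Hc; inversion Hc; subst.
  exact: (le_lt_aux H1 a IH).
- move=> a f n H IH c Hc; inversion Hc; subst; exact: IH.
Qed.

Lemma cle_trans {a b c} : cord_le a b -> cord_le b c -> cord_le a c.
Proof. by move=> H1 H2; apply: ctrans.1 H1 _ H2. Qed.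
Lemma clt_le_trans {a b c} : cord_lt a b -> cord_le b c -> cord_lt a c.
Proof. by move=> H1 H2; apply: ctrans.2 H1 _ H2. Qed.
Lemma cle_lt_trans {a b c} : cord_le a b -> cord_lt b c -> cord_lt a c.
Proof. move=> H1 H2; apply: (le_lt_aux H2) => c' H; exact: cle_trans H1 H. Qed.

Lemma ctot_aux a (H1 : forall b, cord_le a b \/ cord_lt b a) :
  forall b, cord_lt a b \/ cord_le b a.
Proof.
elim => [|b' IH|g IH].
- by right; constructor.
- case: (H1 b') => H; [left; constructor | right; constructor] => //.
- case: (pselect (exists n, cord_lt a (g n))) => [[n Hn]|Hn].
    by left; apply: cord_ltL Hn.
  right; constructor => n; case: (IH n) => // h; exfalso; apply: Hn; by exists n.
Qed.

Lemma ctot a : forall b, (cord_le a b \/ cord_lt b a) /\ (cord_lt a b \/ cord_le b a).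
Proof.
suff H : forall b, cord_le a b \/ cord_lt b a by move=> b; split => //; exact: (@ctot_aux a H).
elim: a => [|a IH|f IH] b.
- by left; constructor.
- case: (@ctot_aux a IH b) => H; [left; constructor | right; constructor] => //.
- case: (pselect (forall n, cord_le (f n) b)) => [H|H].
    by left; constructor.
  have [n Hn] : exists n, ~ cord_le (f n) b.
    by apply: contrapT => Hc; apply: H => n; apply: contrapT => Hn; apply: Hc; exists n.
  right; case: (IH n b) => // h; exact: cord_ltL h.
Qed.

Lemma cmax a b : exists c, [/\ cord_le a c, cord_le b c & (c = a \/ c = b)].
Proof.
case: ((ctot a b).1) => H.
- by exists b; split => //; [exact: cle_refl | right].
- by exists a; split => //; [exact: cle_refl | exact: clt_le | left].
Qed.

Lemma ctot0 c : cord_le c cord0 \/ cord_lt cord0 c.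
Proof. by case: ((ctot cord0 c).2) => H; [right|left]. Qed.

Lemma clt0 {c} : ~ cord_lt c cord0.
Proof. by move=> H; inversion H. Qed.

Fixpoint pe (c : cord) (k : nat) : cord :=
  match c with
  | cord0 => cord0
  | cordS c' => c'
  | cordL f => pe (f (Cantor.of_nat k).1) (Cantor.of_nat k).2
  end.

Lemma peL f k : pe (cordL f) k = pe (f (Cantor.of_nat k).1) (Cantor.of_nat k).2.
Proof. by []. Qed.

Lemma pe_spec c b : cord_lt b c -> exists k, cord_le b (pe c k) /\ cord_lt (pe c k) c.
Proof.
elim: c b => [|c IH|f IH] b H.
- by exfalso; apply: (clt0 H).
- inversion H; subst; exists 0%N; split => //=; constructor; exact: cle_refl.
- inversion H; subst.
  have [k' [h1 h2]] := IH n b H2.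
  exists (Cantor.to_nat (n, k')); rewrite peL Cantor.cancel_of_to /=.
  by split => //; apply: cord_ltL h2.
Qed.

Lemma add_pre (N M : topologicalType) (g : N -> M) c A :
  continuous g -> additive_class c A -> additive_class c (g @^-1` A).
Proof.
move=> gc HA; elim: HA => {c A} [a A h Ho|a A B b h0 hb hB IH ->].
- apply: additive_class_open => //; apply: open_comp => // x _; exact: gc.
- by apply: (@additive_class_union _ a _ (fun n => g @^-1` B n) b).
Qed.

Section Classes.
Variable M : topologicalType.
Hypothesis HFs : forall W : set M, open W ->
  exists F : nat -> set M, (forall n, closed (F n)) /\ W = \bigcup_n F n.

Local Notation add := (@additive_class M).
Local Notation mul := (@multiplicative_class M).

Lemma add_not0 {c A} : ~ cord_lt cord0 c -> add c A -> open A.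
Proof.
move=> H HA; case: HA H => [a A' _ Ho _ //|a A' B b h _ _ _ H]; by case: H.
Qed.

Lemma add_open c A : open A -> add c A.
Proof.
move=> Ho; case: (ctot0 c) => H; first by constructor.
have [F [HF E]] := HFs _ Ho.
apply: (@additive_class_union _ c A F (fun _ => cord0)) => // n.
by apply: additive_class_open; [constructor | apply: closed_openC].
Qed.

Lemma add_T c : add c setT.
Proof. exact: add_open openT. Qed.

Lemma mul_0 c : mul c set0.
Proof. by rewrite /multiplicative_class setC0; exact: add_T. Qed.

Lemma add_mono {b c A} : cord_le b c -> add b A -> add c A.
Proof.
move=> Hbc HA; elim: HA c Hbc => {b A} [a A _ Ho|a A B b h0 hb hB IH ->] c Hc.
- exact: add_open.
- apply: (@additive_class_union _ c _ B b) => //.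
  + exact: clt_le_trans h0 Hc.
  + move=> n; exact: clt_le_trans (hb n) Hc.
Qed.

Lemma mul_mono {b c A} : cord_le b c -> mul b A -> mul c A.
Proof. exact: add_mono. Qed.

Lemma add_form {c A} : cord_lt cord0 c -> add c A ->
  exists p : (nat -> set M) * (nat -> cord),
    [/\ forall n, cord_lt (p.2 n) c, forall n, add (p.2 n) (~` p.1 n) &
        A = \bigcup_n p.1 n].
Proof.
move=> H0 HA; case: HA H0 => [a A' _ Ho H0|a A' B b h hb hB E _].
- have [F [HF E]] := HFs _ Ho; exists (F, fun _ => cord0); split => //= n.
  by apply: additive_class_open; [constructor | apply: closed_openC].
- by exists (B, b).
Qed.

Lemma add_union_mul c (A : nat -> set M) : cord_lt cord0 c ->
  (forall n, exists d, cord_lt d c /\ mul d (A n)) -> add c (\bigcup_n A n).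
Proof.
move=> H0 H; have [d Hd] := choice H.
apply: (@additive_class_union _ c _ A d) => // n; apply Hd.
Qed.

Lemma add_bigcup c (A : nat -> set M) : cord_lt cord0 c ->
  (forall n, add c (A n)) -> add c (\bigcup_n A n).
Proof.
move=> H0 H; have [F HF] := choice (fun n => add_form H0 (H n)).
have -> : \bigcup_n A n =
    \bigcup_m (F (Cantor.of_nat m).1).1 (Cantor.of_nat m).2.
  apply/seteqP; split => x.
  - case=> n _ Ax; have [_ _ E] := HF n; rewrite E in Ax; case: Ax => k _ Bx.
    by exists (Cantor.to_nat (n, k)) => //; rewrite Cantor.cancel_of_to.
  - case=> m _ h; exists (Cantor.of_nat m).1 => //.
    have [_ _ ->] := HF (Cantor.of_nat m).1; by exists (Cantor.of_nat m).2.
apply: add_union_mul => // m; exists ((F (Cantor.of_nat m).1).2 (Cantor.of_nat m).2).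
by have [h1 h2 _] := HF (Cantor.of_nat m).1; split.
Qed.

Lemma le_c0 c : ~ cord_lt cord0 c -> cord_le c cord0.
Proof. by case: (ctot0 c). Qed.

Lemma add_setU c A B : add c A -> add c B -> add c (A `|` B).
Proof.
move=> HA HB; case: (pselect (cord_lt cord0 c)) => H.
- have -> : A `|` B = \bigcup_n (if n is 0%N then A else B).
    apply/seteqP; split => x.
    + by case=> h; [exists 0%N | exists 1%N].
    + by case=> -[|n] _ h; [left|right].
  by apply: add_bigcup => // -[|n].
- apply: additive_class_open; first exact: le_c0.
  by apply: openU; [exact: add_not0 H HA | exact: add_not0 H HB].
Qed.

Lemma add_closed c F : cord_lt cord0 c -> closed F -> add c F.
Proof.
move=> H0 HF; apply: (@additive_class_union _ c F (fun _ => F) (fun _ => cord0)) => //.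
- by move=> n; apply: additive_class_open; [constructor | apply: closed_openC].
- apply/seteqP; split => x; [by exists 0%N | by case].
Qed.

Lemma mul_closed c F : closed F -> mul c F.
Proof. by move=> HF; apply: add_open; apply: closed_openC. Qed.

Lemma add_setI c A B : add c A -> add c B -> add c (A `&` B).
Proof.
move=> HA HB; case: (pselect (cord_lt cord0 c)) => H; last first.
  apply: additive_class_open; first exact: le_c0.
  by apply: openI; [exact: add_not0 H HA | exact: add_not0 H HB].
have [[B1 b1] [h11 h12 E1]] := add_form H HA.
have [[B2 b2] [h21 h22 E2]] := add_form H HB.
have -> : A `&` B = \bigcup_m (B1 (Cantor.of_nat m).1 `&` B2 (Cantor.of_nat m).2).
  rewrite E1 E2; apply/seteqP; split => x.
  - case=> -[n _ h1] [k _ h2].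
    by exists (Cantor.to_nat (n, k)) => //; rewrite Cantor.cancel_of_to.
  - by case=> m _ [h1 h2]; split; [exists (Cantor.of_nat m).1 | exists (Cantor.of_nat m).2].
apply: add_union_mul => // m.
set n := (Cantor.of_nat m).1; set k := (Cantor.of_nat m).2.
have [d [hd1 hd2 hd3]] := cmax (b1 n) (b2 k).
exists d; split; first by case: hd3 => ->.
rewrite /multiplicative_class setCI; apply: add_setU.
- exact: add_mono hd1 (h12 n).
- exact: add_mono hd2 (h22 k).
Qed.

Section Disc.
Variables (I : Type) (G : I -> set M).
Hypothesis HGo : forall i, open (G i).
Hypothesis HGd : forall z : M, exists2 N : set M, nbhs z N &
  forall i j, N `&` G i !=set0 -> N `&` G j !=set0 -> i = j.


Definition DU c := forall E : I -> set M, (forall i, E i `<=` G i) ->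
  (forall i, add c (E i)) -> add c [set x | exists i, E i x].
Definition MU c := forall E : I -> set M, (forall i, E i `<=` G i) ->
  (forall i, mul c (E i)) -> mul c [set x | exists i, E i x].

Lemma G_disj {i j x} : G i x -> G j x -> i = j.
Proof.
move=> hi hj; have [N HN Hd] := HGd x; have Nx := nbhs_singleton HN.
by apply: Hd; exists x.
Qed.

Lemma Q0 c : ~ cord_lt cord0 c -> DU c /\ MU c.
Proof.
move=> H; split => E HEG HE.
- apply: additive_class_open; first exact: le_c0.
  rewrite openE => x [i Ei]; have := add_not0 H (HE i); rewrite openE => /(_ x Ei).
  by apply: filterS => y Ey; exists i.
- apply: additive_class_open; first exact: le_c0.
  apply: closed_openC => p Hp; apply: contrapT => Np.
  have [N HN Hd] := HGd p.
  have [q [[i0 Eq] Nq]] := Hp N HN.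
  have Ei0 : ~ E i0 p by move=> h; apply: Np; exists i0.
  have Ho := add_not0 H (HE i0).
  have Hn : nbhs p (~` E i0) by move: Ho; rewrite openE; apply.
  have [q' [[j Eq'] [Nq' Eq'0]]] := Hp _ (filterI HN Hn).
  have : i0 = j by apply: Hd; [exists q; split => //; exact: HEG | exists q'; split => //; exact: HEG].
  by move=> E0; subst j.
Qed.

Lemma Dstep {c} : cord_lt cord0 c ->
  (forall k, cord_lt (pe c k) c -> MU (pe c k)) -> DU c.
Proof.
move=> H0 IH E HEG HE.
have [F HF] := choice (fun i => add_form H0 (HE i)).
have HK : forall p : I * nat, exists k, cord_le ((F p.1).2 p.2) (pe c k) /\ cord_lt (pe c k) c.
  by move=> [i n] /=; apply: pe_spec; have [h _ _] := HF i.
have [K HKs] := choice HK.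
pose C m i := [set x | K (i, (Cantor.of_nat m).1) = (Cantor.of_nat m).2 /\
                       (F i).1 (Cantor.of_nat m).1 x].
have CE : forall m i, C m i `<=` E i.
  move=> m i x [_ h]; have [_ _ ->] := HF i; by exists (Cantor.of_nat m).1.
have -> : [set x | exists i, E i x] = \bigcup_m [set x | exists i, C m i x].
  apply/seteqP; split => x.
  - case=> i Ex; have [_ _ Ei] := HF i; rewrite Ei in Ex; case: Ex => n _ Bx.
    exists (Cantor.to_nat (n, K (i, n))) => //; exists i.
    by rewrite /C Cantor.cancel_of_to.
  - by case=> m _ [i Cx]; exists i; apply: CE Cx.
apply: add_union_mul => // m.
set n := (Cantor.of_nat m).1; set k := (Cantor.of_nat m).2.
case: (pselect (cord_lt (pe c k) c)) => hk.
- exists (pe c k); split => //; apply: (IH k hk).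
    by move=> i x /CE /HEG.
  move=> i; case: (pselect (K (i, n) = k)) => hK.
  + have -> : C m i = (F i).1 n by apply/seteqP; split => x; [case | ].
    have [_ h2 _] := HF i; apply: (add_mono _ (h2 n)).
    by have [h _] := HKs (i, n); rewrite /= hK in h.
  + have -> : C m i = set0 by apply/seteqP; split => x // [].
    exact: mul_0.
- exists cord0; split => //.
  have -> : [set x | exists i, C m i x] = set0.
    apply/seteqP; split => x // [i [hK _]]; apply: hk.
    by have [_ h] := HKs (i, n); rewrite /= hK in h.
  exact: mul_0.
Qed.

Lemma Mstep {c} : cord_lt cord0 c -> DU c -> MU c.
Proof.
move=> H0 HD E HEG HE.
have [F HF] := choice (fun i => HFs _ (HGo i)).
rewrite /multiplicative_class.
have -> : ~` [set x | exists i, E i x] =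
    ~` [set x | exists i, G i x] `|`
    \bigcup_m [set x | exists i, (F i m `&` ~` E i) x].
  apply/seteqP; split => x.
  - move=> Nx; case: (pselect (exists i, G i x)) => [[i Gx]|h]; last by left.
    right; have [_ Gi] := HF i; rewrite Gi in Gx; case: Gx => m _ Fx.
    exists m => //; exists i; split => // Ex; apply: Nx; by exists i.
  - case.
    + by move=> h [i Ex]; apply: h; exists i; apply: HEG.
    + case=> m _ [i [Fx NEx]] [j Ex].
      have Gi : G i x by have [_ ->] := HF i; exists m.
      have := G_disj Gi (HEG _ _ Ex); move=> E0; subst j; exact: NEx.
apply: add_setU.
- apply: add_closed => //; apply: open_closedC.
  rewrite openE => x [i Gx]; have := HGo i; rewrite openE => /(_ x Gx).
  by apply: filterS => y Gy; exists i.
- apply: add_bigcup => // m; apply: HD.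
  + by move=> i x [Fx _]; have [_ ->] := HF i; exists m.
  + move=> i; apply: add_setI => //.
    * by apply: add_closed => //; have [h _] := HF i; apply: h.
    * exact: HE.
Qed.

Definition QQ c := DU c /\ MU c.

Lemma Qstep c : (forall k, cord_lt (pe c k) c -> QQ (pe c k)) -> QQ c.
Proof.
move=> IH; case: (pselect (cord_lt cord0 c)) => H0; last exact: Q0.
have HD := Dstep H0 (fun k h => (IH k h).2).
by split => //; apply: Mstep.
Qed.

Lemma Qpe c k : QQ (pe c k).
Proof.
elim: c k => [|c IH|f IH] k /=.
- by apply: Q0; apply: clt0.
- by apply: Qstep => k' _; apply: IH.
- exact: IH.
Qed.

Lemma Qall c : QQ c.
Proof. by apply: Qstep => k _; apply: Qpe. Qed.

End Disc.
End Classes.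

Lemma small_inv {R : realType} {e : R} : 0 < e -> exists n : nat, n.+1%:R^-1 < e.
Proof.
move=> e0; exists (Num.bound (e^-1)).
have h0 : 0 <= e^-1 by rewrite invr_ge0 ltW.
have h := archi_boundP h0.
rewrite invf_plt //; last by rewrite posrE ltr0n.
apply: lt_trans h _; by rewrite ltr_nat.
Qed.

Lemma pm_Fs (R : realType) (M : pseudoMetricType R) (W : set M) : open W ->
  exists F : nat -> set M, (forall n, closed (F n)) /\ W = \bigcup_n F n.
Proof.
move=> Wo.
exists (fun n => closure [set p | ball p (n.+1%:R^-1) `<=` W]); split.
  by move=> n; apply: closed_closure.
apply/seteqP; split => p.
- move=> Wp; have : nbhs p W by move: Wo; rewrite openE; apply.
  move=> /nbhs_ballP [e e0 He]; have [n hn] := small_inv (e0 : 0 < e).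
  exists n => //; apply: subset_closure => /=.
  by apply: subset_trans He; apply: le_ball; apply: ltW.
- case=> n _ Hp; set r : R := n.+1%:R^-1.
  have r0 : 0 < r by rewrite /r invr_gt0 ltr0n.
  have r20 : 0 < r / 2 by rewrite divr_gt0.
  have [q [Sq Bq]] := Hp _ (nbhsx_ballx p (r / 2) r20).
  have h : r / 2 <= r by lra.
  apply: Sq; exact: (le_ball h (ball_sym Bq)).
Qed.

Lemma expand_disc (R : realType) (Y : metricType R) (F : set (set Y)) :
  discrete_family F ->
  exists O : set Y -> set Y, [/\ forall U, open (O U),
    forall U, F U -> U `<=` O U &
    forall z : Y, exists2 N : set Y, nbhs z N &
      forall U V, N `&` O U !=set0 -> N `&` O V !=set0 -> U = V].
Proof.
move=> HF.
have Hrho : forall u : Y, exists r : R, 0 < r /\ forall A B, F A -> F B ->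
    (exists a, A a /\ mdist u a < r) -> (exists b, B b /\ mdist u b < r) -> A = B.
  move=> u; have [N HN Hd] := HF u; have [e e0 He] := (nbhs_ballP u N).1 HN.
  exists e; split => // A B FA FB [a [Aa da]] [b [Bb db]]; apply: Hd => //.
  + by exists a; split => //; apply: He; rewrite ballEmdist.
  + by exists b; split => //; apply: He; rewrite ballEmdist.
have [rho Hr] := choice Hrho.
have dxx : forall u : Y, mdist u u = 0 by move=> u; exact: (@mdistxx _ Y u).
have dsym : forall u v : Y, mdist u v = mdist v u by move=> u v; exact: (@metric_sym _ Y u v).
have dtri : forall u v w : Y, mdist u w <= mdist u v + mdist v w.
  by move=> u v w; exact: (@metric_triangle _ Y u v w).
pose O U := [set y | F U /\ exists2 u, U u & mdist u y < rho u / 4].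
exists O; split.
- move=> U; rewrite openE => y [FU [u Uu hu]]; apply/nbhs_ballP.
  exists (rho u / 4 - mdist u y); first by rewrite /= subr_gt0.
  move=> z; rewrite ballEmdist /= => hz; split => //; exists u => //.
  have := dtri u y z; lra.
- move=> U FU u Uu; split => //; exists u => //; rewrite dxx.
  have := (Hr u).1; lra.
- move=> z; have [N HN Hd] := HF z; have [s s0 Hs] := (nbhs_ballP z N).1 HN.
  have s40 : 0 < s / 4 by rewrite divr_gt0.
  exists (ball z (s / 4)); first exact: nbhsx_ballx.
  move=> U V [y1 [B1 [FU [u Uu hu]]]] [y2 [B2 [FV [v Vv hv]]]].
  rewrite ballEmdist /= in B1 B2.
  have key : forall U' u' y', U' u' -> mdist u' y' < rho u' / 4 ->
      mdist z y' < s / 4 -> 3 * s < rho u' \/ (N `&` U' !=set0).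
    move=> U' u' y' Uu' h1 h2; case: (leP (rho u') (3 * s)) => h; [right|by left].
    exists u'; split => //; apply: Hs; rewrite ballEmdist /=.
    have := dtri z y' u'; rewrite (dsym y' u'); lra.
  have tri : mdist u v < rho u / 4 + s / 2 + rho v / 4.
    have := dtri u y1 v; have := dtri y1 z v; have := dtri z y2 v.
    rewrite (dsym y1 z) (dsym y2 v); lra.
  have fin : 3 * s < rho u \/ 3 * s < rho v -> U = V.
    have hu0 := (Hr u).1; have hv0 := (Hr v).1.
    move=> H3; case: (leP (rho v) (rho u)) => h.
    + apply: (Hr u).2 => //; [exists u; rewrite dxx | exists v]; split => //; lra.
    + apply/esym; apply: (Hr v).2 => //; [exists v; rewrite dxx | exists u];
        split => //; rewrite ?(dsym v u); lra.
  case: (key U u y1 Uu hu B1) => [h|h1]; first by apply: fin; left.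
  case: (key V v y2 Vv hv B2) => [h|h2]; first by apply: fin; right.
  exact: Hd.
Qed.

Lemma open_ballU (R : realType) (Z : metricType R) (V : set Z) (e : R) :
  open [set w | exists2 z, ball z (4 * e) `<=` V & mdist z w < 2 * e].
Proof.
rewrite openE => w [z Hz hw]; apply/nbhs_ballP.
exists (2 * e - mdist z w); first by rewrite /= subr_gt0.
move=> w'; rewrite ballEmdist /= => h; exists z => //.
have := @metric_triangle _ Z z w w'; lra.
Qed.

Lemma fst_cont (X Y : topologicalType) : continuous (fst : X * Y -> X).
Proof. move=> p; exact: cvg_fst. Qed.
Lemma snd_cont (X Y : topologicalType) : continuous (snd : X * Y -> Y).
Proof. move=> p; exact: cvg_snd. Qed.
Lemma nbhsTX (X Y : topologicalType) (x : X) (y : Y) N :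
  nbhs y N -> nbhs (x, y) (setT `*` N).
Proof. move=> HN; exists (setT, N) => //=; split => //; exact: filterT. Qed.

Theorem theorem3p19 (R : realType) (X Y Z : metricType R) (a : cord)
    (f : X * Y -> Z) :
  cord_le (cordS cord0) a ->
  equi_GLP a (range (fun x : X => fun y : Y => f (x, y))) ->
  (forall y : Y, borel_class a (fun x : X => f (x, y))) ->
  borel_class a f.
Proof.
move=> Ha HG Hsec V Vo.
have H0 : cord_lt cord0 a by inversion Ha.
have HFs := @pm_Fs R (X * Y)%type.
pose eps (k : nat) : R := k.+1%:R^-1.
have eps0 : forall k, 0 < eps k by move=> k; rewrite /eps invr_gt0 ltr0n.
have [A HA] := choice (fun k => HG (eps k) (eps0 k)).
have HGG0 : forall k, exists G : nat -> set (set Y),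
    (forall n, discrete_family (G n)) /\ A k = \bigcup_n G n.
  by move=> k; have [[G h1 h2] _ _ _] := HA k; exists G.
have [GG HGG] := choice HGG0.
have HO0 := fun p : (nat * nat)%type => @expand_disc R Y _ ((HGG p.1).1 p.2).
have [Ob HO] := choice HO0.
have Hrep0 : forall U : set Y, exists o : option Y,
    match o with Some y => U y | None => U = set0 end.
  move=> U; case: (pselect (U !=set0)) => [[y Uy]|h]; first by exists (Some y).
  exists None; apply/seteqP; split => y // Uy; apply: h; by exists y.
have [rep Hrep] := choice Hrep0.
pose Vk k := [set w | exists2 z, ball z (4 * eps k) `<=` V & mdist z w < 2 * eps k].
pose P k U : set X := match rep U with
  | Some y => [set x | Vk k (f (x, y))] | None => set0 end.
pose E (m : nat) (U : set Y) : set (X * Y) :=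
  [set p | GG (Cantor.of_nat m).1 (Cantor.of_nat m).2 U /\
           P (Cantor.of_nat m).1 U p.1 /\ U p.2].
have -> : f @^-1` V = \bigcup_m [set p | exists U, E m U p].
  apply/seteqP; split => -[x y] /=.
  - move=> Vf; have : nbhs (f (x, y)) V by move: Vo; rewrite openE; apply.
    move=> /nbhs_ballP [e e0 He].
    have e40 : 0 < e / 4 by rewrite divr_gt0.
    have [k hk] := small_inv e40.
    have [_ _ Hcov Hdiam] := HA k.
    have : (\bigcup_(U in A k) U) y by rewrite Hcov.
    case=> U AU Uy.
    have [_ HAk] := HGG k; have AU' := AU; rewrite HAk in AU'; case: AU' => n _ GU.
    exists (Cantor.to_nat (k, n)) => //; exists U; rewrite /E Cantor.cancel_of_to /=.
    split => //; split => //.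
    rewrite /P; move: (Hrep U); case: (rep U) => [y0 Uy0|U0]; last by rewrite U0 in Uy.
    exists (f (x, y)).
    + apply: subset_trans He; apply: le_ball.
      have hk2 : eps k < e / 4 := hk; have := eps0 k; lra.
    + have := Hdiam U (fun y => f (x, y)) AU (ex_intro2 _ _ x I erefl) y y0 Uy Uy0.
      have := eps0 k; lra.
  - case=> m _ [U [GU [Px Uy]]].
    set k := (Cantor.of_nat m).1 in GU Px; set n := (Cantor.of_nat m).2 in GU.
    have [_ _ Hcov Hdiam] := HA k.
    have AU : A k U by have [_ ->] := HGG k; exists n.
    move: (Hrep U) Px; rewrite /P; case: (rep U) => [y0 Uy0|_] // [z Hz hz].
    apply: Hz; rewrite ballEmdist /=.
    have := Hdiam U (fun y => f (x, y)) AU (ex_intro2 _ _ x I erefl) y0 y Uy0 Uy.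
    have := @metric_triangle _ Z z (f (x, y0)) (f (x, y)).
    have := eps0 k; lra.
apply: (@add_bigcup _ HFs a) => // m.
set k := (Cantor.of_nat m).1; set n := (Cantor.of_nat m).2.
have [Oo Osub Odisc] := HO (k, n).
have HGo : forall U, open [set p : X * Y | Ob (k, n) U p.2].
  move=> U; apply: (@open_comp _ _ snd (Ob (k, n) U)) => // p _; exact: snd_cont.
have HGd : forall z : X * Y, exists2 N : set (X * Y), nbhs z N &
    forall U W, N `&` [set p : X * Y | Ob (k, n) U p.2] !=set0 ->
      N `&` [set p : X * Y | Ob (k, n) W p.2] !=set0 -> U = W.
  move=> [x y]; have [N HN Hd] := Odisc y; exists (setT `*` N); first exact: nbhsTX.
  move=> U W [q [[_ Nq] Oq]] [q' [[_ Nq'] Oq']]; apply: Hd.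
  + by exists q.2.
  + by exists q'.2.
apply: (@Qall _ HFs (set Y) _ HGo HGd a).1.
- by move=> U p [GU [_ Up]]; apply: Osub.
- move=> U; case: (pselect (GG k n U)) => hU; last first.
    have -> : E m U = set0 by apply/seteqP; split => p // [].
    exact: (@add_open _ HFs a set0 open0).
  have -> : E m U = fst @^-1` (P k U) `&` snd @^-1` U.
    by apply/seteqP; split => p; [case=> _ [] | case=> h1 h2].
  apply: (@add_setI _ HFs a).
  + apply: add_pre; first exact: fst_cont.
    rewrite /P; case: (rep U) => [y|].
    * by apply: Hsec; apply: open_ballU.
    * exact: (@add_open X (@pm_Fs R X) a set0 open0).
  + apply: add_pre; first exact: snd_cont.
    have [_ Hcl _ _] := HA k; apply: Hcl.
    by have [_ ->] := HGG k; exists n.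
Qed.
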